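(* Let $r_{BD}$ be the Belavin–Drinfeld $r$-matrix for $sl(n,\overline{\mathbb{K}})$ associated to an admissible triple $(\Gamma_1,\Gamma_2,\tau)$. Then $C(r_{BD})$ consists exactly of the diagonal matrices $T=\mathrm{diag}(t_1,\dots,t_n)$ with $t_i=s_is_{i+1}\cdots s_n$, where $s_1,\dots,s_n\in\overline{\mathbb{K}}^\times$ satisfy $s_i=s_j$ whenever $\alpha_i\in\Gamma_1$ and $\tau(\alpha_i)=\alpha_j$.
   Context: $\mathbb{K}=\mathbb{C}((\hbar))$, $\overline{\mathbb{K}}$ its algebraic closure. For $sl(n)$: Cartan $\mathfrak{h}$ = traceless diagonal matrices, simple roots $\alpha_i=\epsilon_i-\epsilon_{i+1}$, root vectors $e_{\epsilon_i-\epsilon_k}=e_{ik}$, $\Omega=\sum_{i,k}e_{ik}\otimes e_{ki}-\frac1nI\otimes I$ with Cartan part $\Omega_0$. Admissible triple: $\Gamma_1,\Gamma_2\subset\{\alpha_1,\dots,\alpha_{n-1}\}$, $\tau:\Gamma_1\to\Gamma_2$ isometric bijection with every $\alpha\in\Gamma_1$ having some $\tau^k(\alpha)\notin\Gamma_1$. $r_{BD}=r_0+\sum_{\alpha>0}e_\alpha\otimes e_{-\alpha}+\sum_{\beta\in(\mathbb{Z}\Gamma_1)^+}\sum_{k\ge1}e_\beta\wedge e_{-\tau^k(\beta)}$ with $r_0\in\mathfrak{h}(\overline{\mathbb{K}})^{\otimes2}$, $r_0+r_0^{21}=\Omega_0$, $(\tau(\alpha)\otimes1+1\otimes\alpha)(r_0)=0$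 for $\alpha\in\Gamma_1$. $C(r)=\{X\in GL(n,\overline{\mathbb{K}}):(\mathrm{Ad}_X\otimes\mathrm{Ad}_X)(r)=r\}$ with $\mathrm{Ad}_X(a)=XaX^{-1}$. *)

(* Defs.v *)
From HB Require Import structures.
From mathcomp Require Import all_boot all_order all_algebra.
Set Implicit Arguments. Unset Strict Implicit. Unset Printing Implicit Defensive.
Import Order.TTheory GRing.Theory Num.Theory.
Local Open Scope ring_scope.

(* Elements of gl(n) (x) gl(n) are represented as t = sum_{(i,j)} e_ij (x) t(i,j),
   i.e. as finite functions from pairs of indices to n x n matrices. *)
Definition tensor (F : fieldType) (n : nat) := {ffun 'I_n * 'I_n -> 'M[F]_n}.

Section BD.
Variables (F : fieldType) (n : nat).

Definition E (i k : 'I_n) : 'M[F]_n := delta_mx i k.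

Definition tp (a b : 'M[F]_n) : tensor F n := [ffun p => a p.1 p.2 *: b].

Definition wedge (a b : 'M[F]_n) : tensor F n := tp a b - tp b a.

Definition tmap (f g : 'M[F]_n -> 'M[F]_n) (t : tensor F n) : tensor F n :=
  \sum_(p : 'I_n * 'I_n) tp (f (E p.1 p.2)) (g (t p)).

Definition Ad (X : 'M[F]_n) (a : 'M[F]_n) : 'M[F]_n := X *m a *m invmx X.

Definition Cset (r : tensor F n) (X : 'M[F]_n) : Prop :=
  X \in unitmx /\ tmap (Ad X) (Ad X) r = r.

(* Simple roots alpha_j = eps_j - eps_{j+1} indexed by j : 'I_n.-1 (0-based). *)
Definition sr_lo (j : 'I_n.-1) : 'I_n := widen_ord (leq_pred n) j.
Lemma sr_hi_proof (j : 'I_n.-1) : (j.+1 < n)%N.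
Proof. by rewrite -ltn_predRL. Qed.
Definition sr_hi (j : 'I_n.-1) : 'I_n := Ordinal (sr_hi_proof j).

(* inner product (alpha_i, alpha_j) of simple roots of sl(n) *)
Definition cartan (i j : 'I_n.-1) : int :=
  if i == j then 2%:~R else if (i.+1 == j :> nat) || (j.+1 == i :> nat) then - 1 else 0.

(* Admissible triple (Gamma1, Gamma2, tau); tau is a total function on simple
   root indices, only its restriction to Gamma1 matters. *)
Definition admissible (G1 G2 : {set 'I_n.-1}) (tau : 'I_n.-1 -> 'I_n.-1) : Prop :=
  [/\ {in G1 &, injective tau}, tau @: G1 = G2,
      {in G1 &, forall i j, cartan (tau i) (tau j) = cartan i j} &
      forall i, i \in G1 -> exists k, iter k tau i \notin G1].

(* Root lattice elements in coordinates w.r.t. simple roots. *)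
(* positive root eps_a - eps_b (a < b) = alpha_a + ... + alpha_{b-1} *)
Definition rootc (a b : nat) : 'I_n.-1 -> int := fun j => ((a <= j) && (j < b))%N%:Z.

(* linear extension of tau to Z Gamma1 *)
Definition tauc (G1 : {set 'I_n.-1}) (tau : 'I_n.-1 -> 'I_n.-1) (c : 'I_n.-1 -> int)
  : 'I_n.-1 -> int := fun m => \sum_(j in G1 | tau j == m) c j.

Definition inZG1 (G1 : {set 'I_n.-1}) (c : 'I_n.-1 -> int) : bool :=
  [forall j, (j \notin G1) ==> (c j == 0)].

(* beta = eps_i - eps_k lies in (Z Gamma1)^+, tau^p(beta) is defined
   (i.e. tau^m(beta) in Z Gamma1 for all m < p) and equals eps_a - eps_b *)
Definition tau_pow_maps (G1 : {set 'I_n.-1}) (tau : 'I_n.-1 -> 'I_n.-1)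
  (p : nat) (i k a b : 'I_n) : bool :=
  [forall m : 'I_p, inZG1 G1 (iter m (tauc G1 tau) (rootc i k))] &&
  [forall j, iter p (tauc G1 tau) (rootc i k) j == rootc a b j].

Definition r0_of (R0 : 'M[F]_n) : tensor F n :=
  \sum_(i < n) \sum_(j < n) R0 i j *: tp (E i i) (E j j).

(* r0 lies in h (x) h, h = traceless diagonal matrices *)
Definition in_hh (R0 : 'M[F]_n) : Prop :=
  (forall i, \sum_(j < n) R0 i j = 0) /\ (forall j, \sum_(i < n) R0 i j = 0).

(* coefficient matrix of Omega_0 = sum_i e_ii (x) e_ii - 1/n I (x) I *)
Definition Omega0c : 'M[F]_n := \matrix_(i, j) ((i == j)%:R - n%:R^-1).

(* alpha_j as a linear functional on diagonal matrices: weights *)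
Definition rw (j : 'I_n.-1) (i : 'I_n) : F := (i == sr_lo j)%:R - (i == sr_hi j)%:R.

(* (tau(alpha_j) (x) 1 + 1 (x) alpha_j)(r0) = 0, written coefficientwise on the
   basis e_mm of the diagonal *)
Definition r0_tau_cond (G1 : {set 'I_n.-1}) (tau : 'I_n.-1 -> 'I_n.-1) (R0 : 'M[F]_n) : Prop :=
  forall j, j \in G1 -> forall m : 'I_n,
    \sum_(i < n) rw (tau j) i * R0 i m + \sum_(k < n) rw j k * R0 m k = 0.

Definition rBD (G1 : {set 'I_n.-1}) (tau : 'I_n.-1 -> 'I_n.-1) (R0 : 'M[F]_n) : tensor F n :=
  r0_of R0
  + \sum_(i < n) \sum_(k < n | (i < k)%N) tp (E i k) (E k i)
  + \sum_(i < n) \sum_(k < n | (i < k)%N) \sum_(a < n) \sum_(b < n | (a < b)%N)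
      \sum_(1 <= p < n.+1 | tau_pow_maps G1 tau p i k a b) wedge (E i k) (E b a).

Definition Tdiag (s : 'I_n -> F) : 'M[F]_n := diag_mx (\row_(i < n) \prod_(k < n | (i <= k)%N) s k).

End BD.

(* Main.v *)
Require Import Defs.
From HB Require Import structures.
From mathcomp Require Import all_boot all_order all_algebra.
From mathcomp Require Import ring zify.
From Stdlib Require Import Classical FunctionalExtensionality.
Import Order.TTheory GRing.Theory Num.Theory.
Set Implicit Arguments. Unset Strict Implicit. Unset Printing Implicit Defensive.
Local Open Scope ring_scope.

Lemma orbit_all (n : nat) (f : 'I_n.-1 -> 'I_n.-1) (S : {set 'I_n.-1}) x :
  (forall m, (m < n)%N -> iter m f x \in S) -> forall m, iter m f x \in S.
Proof.
move=> H.
have key : forall a b : nat, (a < b)%N -> (b < n)%N -> iter a f x = iter b f x ->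
    forall m, iter m f x \in S.
  move=> a b hab hbn he m; elim/ltn_ind: m => m IH.
  case: (ltnP m b) => hm; first by apply: H; lia.
  have -> : iter m f x = iter (m - b + a) f x.
    by rewrite -{1}(subnK hm) iterD -he -iterD.
  apply: IH; lia.
pose g (m : 'I_n) := iter m f x.
have : ~ injective g.
  move=> hinj; have := leq_card _ hinj; rewrite !card_ord.
  have := ltn_ord x; lia.
move=> hni.
have [a [b [hab hg]]] : exists a b : 'I_n, a != b /\ g a = g b.
  apply: NNPP => Hn; apply: hni => a b hg; apply/eqP; apply/negPn/negP => hab.
  by apply: Hn; exists a, b.
case: (ltngtP a b) => h.
- exact: (key a b h (ltn_ord b) hg).
- exact: (key b a h (ltn_ord a) (esym hg)).
- by move: hab; rewrite -(inj_eq val_inj) /= h eqxx.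
Qed.

Section Comb.
Variables (n : nat) (G1 : {set 'I_n.-1}) (tau : 'I_n.-1 -> 'I_n.-1).
Local Notation tpm := (tau_pow_maps G1 tau).
Local Notation T := (tauc G1 tau).

Lemma tpmP p (i k a b : 'I_n) : tpm p i k a b <->
  (forall m, (m < p)%N -> inZG1 G1 (iter m T (rootc i k))) /\
  iter p T (rootc i k) = rootc a b.
Proof.
split.
  move/andP => [/forallP H1 /forallP H2]; split.
    move=> m hm; exact: (H1 (Ordinal hm)).
  apply: functional_extensionality => j; exact/eqP/(H2 j).
move=> [H1 H2]; apply/andP; split; apply/forallP => j.
  exact: H1.
by rewrite H2.
Qed.

Lemma tpm_comp p q (i k a b c d : 'I_n) :
  tpm p i k a b -> tpm q a b c d -> tpm (p + q) i k c d.
Proof.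
move=> /tpmP [H1 H2] /tpmP [H3 H4]; apply/tpmP; split.
  move=> m hm; case: (ltnP m p) => h; first exact: H1.
  rewrite -(subnK h) iterD H2; apply: H3; lia.
by rewrite addnC iterD H2.
Qed.

Lemma tauc_ge0 c x : (forall y, 0 <= c y) -> 0 <= T c x.
Proof. move=> H; rewrite /tauc; apply: sumr_ge0 => j _; exact: H. Qed.

Hypothesis Hadm : forall i, i \in G1 -> exists k, iter k tau i \notin G1.

Lemma no_long p (i k a b : 'I_n) : (i < k)%N -> (n <= p)%N -> ~ tpm p i k a b.
Proof.
move=> hik hnp /tpmP [H1 _].
have hi : (i < n.-1)%N by have := ltn_ord k; lia.
pose j0 : 'I_n.-1 := Ordinal hi.
set c := fun m => iter m T (rootc i k).
have nn : forall m y, 0 <= c m y.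
  elim=> [|m IH] y; first by rewrite /c /= /rootc.
  rewrite /c iterS; exact: tauc_ge0.
have pos : forall m, (m <= p)%N -> 0 < c m (iter m tau j0).
  elim=> [|m IH] hm.
    by rewrite /c /= /rootc /= leqnn hik.
  have hm' : (m < p)%N by lia.
  have inG : iter m tau j0 \in G1.
    have := H1 m hm'; move/forallP => /(_ (iter m tau j0)).
    apply: contraLR => hn; rewrite hn /=; by rewrite lt0r_neq0 // IH // ltnW.
  rewrite /c iterS /= /tauc (bigD1 (iter m tau j0)) /=; last by rewrite inG eqxx.
  apply: (lt_le_trans (IH (ltnW hm))); rewrite lerDl; apply: sumr_ge0 => y _; exact: nn.
have allin : forall m, (m < n)%N -> iter m tau j0 \in G1.
  move=> m hm.
  have hm' : (m < p)%N by lia.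
  have := H1 m hm'; move/forallP => /(_ (iter m tau j0)).
  apply: contraLR => hn; rewrite hn /=; by rewrite lt0r_neq0 // pos // ltnW.
have j0in : j0 \in G1 by apply: (allin 0); lia.
have [m hm] := Hadm j0in.
by rewrite (orbit_all allin) in hm.
Qed.

End Comb.

Section W.
Variables (F : fieldType) (n : nat) (G1 : {set 'I_n.-1}) (tau : 'I_n.-1 -> 'I_n.-1).
Variables (s : 'I_n -> F).
Hypothesis hs : forall i, s i != 0.
Hypothesis hst : forall j, j \in G1 -> s (sr_lo j) = s (sr_lo (tau j)).

Definition wt (c : 'I_n.-1 -> int) : F := \prod_(j : 'I_n.-1) s (sr_lo j) ^ (c j).

Lemma exprz_sum (x : F) I (r : seq I) (P : pred I) (f : I -> int) : x != 0 ->
  x ^ (\sum_(i <- r | P i) f i) = \prod_(i <- r | P i) x ^ (f i).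
Proof.
move=> hx; have hu : x \is a GRing.unit by rewrite unitfE.
exact: (big_morph (fun e => x ^ e) (exprzDr hu) (expr0z x)).
Qed.

Lemma wt_tauc c : inZG1 G1 c -> wt (tauc G1 tau c) = wt c.
Proof.
move=> hc; rewrite /wt /tauc.
transitivity (\prod_(m : 'I_n.-1) \prod_(j in G1 | tau j == m) s (sr_lo j) ^ (c j)).
  apply eq_bigr => m _; rewrite exprz_sum //; apply eq_bigr => j /andP [hj /eqP <-].
  by rewrite (hst hj).
transitivity (\prod_(j in G1) s (sr_lo j) ^ c j).
  by rewrite [RHS](partition_big (P := fun j => j \in G1) tau predT).
rewrite [RHS](bigID (fun j => j \in G1)) /= [X in _ = _ * X]big1 ?mulr1 //.
move=> j hj; move/forallP: hc => /(_ j); rewrite hj /= => /eqP ->; by rewrite expr0z.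
Qed.

Local Notation T := (tauc G1 tau).

Lemma wt_tpm p (i k a b : 'I_n) : tau_pow_maps G1 tau p i k a b -> wt (rootc i k) = wt (rootc a b).
Proof.
move=> /tpmP [H1 H2]; rewrite -H2.
suff : forall m, (m <= p)%N -> wt (iter m T (rootc i k)) = wt (rootc i k) by move=> /(_ p (leqnn p)).
elim=> [//|m IH] hm; rewrite iterS wt_tauc ?IH //; [exact: ltnW | exact: H1].
Qed.

Definition sN (m : nat) : F := odflt 1 (omap s (insub m)).
Lemma sN_val (o : 'I_n) : sN o = s o.
Proof. by rewrite /sN valK. Qed.

Definition tt (i : 'I_n) : F := \prod_(m < n | (i <= m)%N) s m.

Lemma wt_root (i k : 'I_n) : (i <= k)%N -> tt i = wt (rootc i k) * tt k.
Proof.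
move=> hik.
have hk : (k <= n.-1)%N by have := ltn_ord k; lia.
have e1 : wt (rootc i k) = \prod_(m < n | (i <= m)%N && (m < k)%N) sN m.
  rewrite /wt.
  transitivity (\prod_(j < n.-1 | (i <= j)%N && (j < k)%N) sN j).
    rewrite [RHS]big_mkcond; apply eq_bigr => j _; rewrite /rootc.
    case: ifP => h; first by rewrite expr1z -sN_val.
    by rewrite expr0z.
  rewrite (big_ord_widen_cond (n1 := n.-1) n (fun m => (i <= m)%N && (m < k)%N) sN); last by lia.
  apply eq_bigl => m; apply/idP/idP; [by move/andP => [] | ].
  move=> h; rewrite h /=; move: h => /andP [_ h]; lia.
rewrite e1 /tt.
under eq_bigr do rewrite -sN_val.
under [X in _ = _ * X]eq_bigr do rewrite -sN_val.
rewrite (bigID (fun m : 'I_n => (m < k)%N)) /=; congr (_ * _).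
apply eq_bigl => m; apply/idP/idP.
  move/andP => [h1 h2]; lia.
move=> h; apply/andP; split; lia.
Qed.

Lemma weight p (i k a b : 'I_n) : (i <= k)%N -> (a <= b)%N ->
  tau_pow_maps G1 tau p i k a b -> tt i * tt b = tt k * tt a.
Proof.
move=> hik hab ht.
by rewrite (wt_root hik) (wt_root hab) (wt_tpm ht); ring.
Qed.

Lemma tt_neq0 i : tt i != 0.
Proof. rewrite /tt; apply/prodf_neq0 => m _; exact: hs. Qed.

End W.

Section MX.
Variables (F : fieldType) (n : nat).
Local Notation Sh := (\matrix_(i, j) ((j : nat) == i.+1)%:R : 'M[F]_n).

Definition powm (A : 'M[F]_n) k := iter k (mulmx A) 1%:M.

Lemma powm_conj (Y Yi A : 'M[F]_n) k : Yi *m Y = 1%:M ->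
  powm (Y *m A *m Yi) k.+1 = Y *m powm A k.+1 *m Yi.
Proof.
move=> h; elim: k => [|k IH]; first by rewrite /powm /= !mulmx1.
rewrite /powm iterS -/(powm _ k.+1) IH iterS -/(powm _ k.+1).
by rewrite !mulmxA -[Y *m A *m Yi *m Y](mulmxA) h mulmx1.
Qed.

Lemma powm_Sh k (u v : 'I_n) : powm Sh k u v = ((v : nat) == (u + k)%N)%:R.
Proof.
elim: k u v => [|k IH] u v.
  by rewrite /powm /= mxE addn0 eq_sym.
rewrite /powm iterS -/(powm _ k) mxE.
case: (ltnP u.+1 n) => hu.
  rewrite (bigD1 (Ordinal hu)) //= big1 ?addr0.
    by rewrite mxE eqxx mul1r IH /= addSnnS.
  move=> j hj; rewrite mxE.
  have -> : ((j : nat) == u.+1) = false.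
    apply/negbTE; apply: contra hj => /eqP e; apply/eqP/val_inj => /=; exact: e.
  by rewrite mul0r.
rewrite big1.
  have -> : ((v : nat) == (u + k.+1)%N) = false by apply/negbTE; have := ltn_ord v; lia.
  by [].
move=> j _; rewrite mxE.
have -> : ((j : nat) == u.+1) = false by apply/negbTE; have := ltn_ord j; lia.
by rewrite mul0r.
Qed.

Lemma powm_Sh_n : powm Sh n = 0.
Proof.
apply/matrixP => u v; rewrite powm_Sh mxE.
have -> : ((v : nat) == (u + n)%N) = false by apply/negbTE; have := ltn_ord v; lia.
by [].
Qed.

Lemma powm_upper (C : 'M[F]_n) : (forall u v : 'I_n, (v < u)%N -> C u v = 0) ->
  forall k, (forall u v : 'I_n, (v < u)%N -> powm C k u v = 0) /\
            (forall u : 'I_n, powm C k u u = C u u ^+ k).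
Proof.
move=> hC; elim=> [|k [IH1 IH2]].
  split => [u v h|u]; rewrite /powm /= mxE ?expr0 ?eqxx //.
  have -> : (u == v) = false by apply/negbTE; rewrite neq_ltn h orbT.
  by [].
split.
  move=> u v h; rewrite /powm iterS -/(powm _ k) mxE big1 // => j _.
  case: (ltnP j u) => hj; first by rewrite hC ?mul0r.
  by rewrite IH1 ?mulr0 //; apply: (leq_trans h).
move=> u; rewrite /powm iterS -/(powm _ k) mxE (bigD1 u) //= big1 ?addr0.
  by rewrite IH2 exprS.
move=> j hj; case: (ltnP j u) => h; first by rewrite hC ?mul0r.
rewrite IH1 ?mulr0 //; rewrite ltn_neqAle h andbT; apply: contra hj => /eqP e.
by apply/eqP/val_inj.
Qed.

Lemma diag0 (Y Yi : 'M[F]_n) : (0 < n)%N -> Yi *m Y = 1%:M ->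
  (forall u v : 'I_n, (v < u)%N -> (Y *m Sh *m Yi) u v = 0) ->
  forall u, (Y *m Sh *m Yi) u u = 0.
Proof.
move=> hn h hl u.
have [_ H2] := powm_upper hl n.
have e : powm (Y *m Sh *m Yi) n = 0.
  by rewrite -[X in powm _ X](prednK hn) powm_conj // [X in powm _ X](prednK hn) powm_Sh_n mulmx0 mul0mx.
have := H2 u; rewrite e mxE.
move/esym/eqP; rewrite expf_eq0 => /andP [_ /eqP] //.
Qed.

Lemma TriU (X C : 'M[F]_n) : X *m Sh = C *m X ->
  (forall u v : 'I_n, C u v != 0 -> (u < v)%N) ->
  forall i j : 'I_n, (j < i)%N -> X i j = 0.
Proof.
move=> e hC.
suff : forall d (i : 'I_n), (n - i <= d)%N -> forall j : 'I_n, (j < i)%N -> X i j = 0.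
  by move=> H i; apply: (H (n - i)%N).
elim=> [|d IH] i hd j hj; first by have := ltn_ord i; lia.
have hj1 : (j.+1 < n)%N by have := ltn_ord i; lia.
have := congr1 (fun M : 'M[F]_n => M i (Ordinal hj1)) e; rewrite /= !mxE.
rewrite (bigD1 j) //= mxE eqxx mulr1 big1 ?addr0; last first.
  move=> k hk; rewrite mxE.
  have -> : (j.+1 == k.+1) = false.
    apply/negbTE; rewrite eqSS; apply: contra hk => /eqP e'; apply/eqP/val_inj; by rewrite /= e'.
  by rewrite mulr0.
move=> ->; apply: big1 => k _.
have [hk|hk] := eqVneq (C i k) 0; first by rewrite hk mul0r.
have hik := hC _ _ hk.
rewrite (IH k) ?mulr0 //=; lia.
Qed.

Lemma TriL (X C : 'M[F]_n) : X *m Sh^T = C *m X ->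
  (forall u v : 'I_n, C u v != 0 -> (v < u)%N) ->
  forall i j : 'I_n, (i < j)%N -> X i j = 0.
Proof.
move=> e hC.
have hrow : forall (i j : 'I_n) (hj0 : (j.-1 < n)%N), (0 < j)%N ->
    X i j = \sum_(k < n) C i k * X k (Ordinal hj0).
  move=> i j hj0 hj; have := congr1 (fun M : 'M[F]_n => M i (Ordinal hj0)) e.
  rewrite /= !mxE => <-.
  rewrite (bigD1 j) //= !mxE big1 ?addr0.
    rewrite (_ : ((j : nat) == j.-1.+1) = true) ?mulr1 //; apply/eqP; lia.
  move=> k hk; rewrite !mxE.
  have -> : ((k : nat) == j.-1.+1) = false.
    apply/negbTE; apply: contra hk => /eqP e'; apply/eqP/val_inj; rewrite /= e'; lia.
  by rewrite mulr0.
suff : forall d (i : 'I_n), (i <= d)%N -> forall j : 'I_n, (i < j)%N -> X i j = 0.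
  by move=> H i; apply: (H i).
elim=> [|d IH] i hd j hj.
all: have hj0 : (j.-1 < n)%N by have := ltn_ord j; lia.
all: rewrite (hrow i j hj0); last by lia.
all: apply: big1 => k _.
all: have [hk|hk] := eqVneq (C i k) 0; first by rewrite hk mul0r.
all: have hik := hC _ _ hk.
  lia.
rewrite (IH k) ?mulr0 //=; lia.
Qed.


Lemma diag_inv (X : 'M[F]_n) : X \in unitmx -> (forall i j : 'I_n, i != j -> X i j = 0) ->
  (forall u, X u u != 0) /\ (forall u v, invmx X u v = (u == v)%:R / X u u).
Proof.
move=> hX hd.
have e : forall u v, X u u * invmx X u v = (u == v)%:R.
  move=> u v; have := congr1 (fun M : 'M[F]_n => M u v) (mulmxV hX); rewrite /= !mxE.
  rewrite (bigD1 u) //= big1 ?addr0 // => k hk; by rewrite hd ?mul0r // eq_sym.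
have nz : forall u, X u u != 0.
  by move=> u; apply/eqP => h; have := e u u; rewrite h mul0r eqxx => /eqP; rewrite eq_sym oner_eq0.
split => // u v; by rewrite -(e u v) mulrAC mulfV ?mul1r.
Qed.

Lemma Ad_diagE (X B : 'M[F]_n) : X \in unitmx -> (forall i j : 'I_n, i != j -> X i j = 0) ->
  forall u v, (X *m B *m invmx X) u v = X u u * B u v / X v v.
Proof.
move=> hX hd u v; have [nz hi] := diag_inv hX hd.
rewrite mxE (bigD1 v) //= big1 ?addr0.
  rewrite hi eqxx mul1r mxE (bigD1 u) //= big1 ?addr0 ?mulrA //.
  by move=> k hk; rewrite hd ?mul0r // eq_sym.
by move=> k hk; rewrite hi (negbTE hk) mul0r mulr0.
Qed.

End MX.

Section S.
Variables (F : fieldType) (n : nat).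

Lemma sum_delta (j : 'I_n) (G : 'I_n -> F) : \sum_(i < n) (i == j)%:R * G i = G j.
Proof.
rewrite (bigD1 j) //= eqxx mul1r big1 ?addr0 // => i /negbTE ->; by rewrite mul0r.
Qed.

Lemma sum_delta_pair (a b : 'I_n) (G : 'I_n * 'I_n -> F) :
  \sum_(q : 'I_n * 'I_n) ((q.1 == a) && (q.2 == b))%:R * G q = G (a, b).
Proof.
rewrite (bigD1 (a, b)) //= !eqxx mul1r big1 ?addr0 // => q /negbTE.
case: q => x y /=; rewrite xpair_eqE => ->; by rewrite mul0r.
Qed.

Definition Lt (t : tensor F n) (C : 'M[F]_n) : 'M[F]_n :=
  \sum_(q : 'I_n * 'I_n) C q.2 q.1 *: t q.

Lemma LtD t1 t2 C : Lt (t1 + t2) C = Lt t1 C + Lt t2 C.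
Proof. rewrite /Lt -big_split; apply eq_bigr => q _; by rewrite ffunE scalerDr. Qed.
Lemma Lt0 C : Lt 0 C = 0.
Proof. rewrite /Lt big1 // => q _; by rewrite ffunE scaler0. Qed.
Lemma LtN t C : Lt (- t) C = - Lt t C.
Proof. rewrite /Lt -sumrN; apply eq_bigr => q _; by rewrite ffunE scalerN. Qed.
Lemma LtB t1 t2 C : Lt (t1 - t2) C = Lt t1 C - Lt t2 C.
Proof. by rewrite LtD LtN. Qed.
Lemma LtZ c t C : Lt (c *: t) C = c *: Lt t C.
Proof. rewrite /Lt scaler_sumr; apply eq_bigr => q _; by rewrite ffunE !scalerA mulrC. Qed.
Lemma Lt_sum I (r : seq I) (P : pred I) (f : I -> tensor F n) C :
  Lt (\sum_(i <- r | P i) f i) C = \sum_(i <- r | P i) Lt (f i) C.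
Proof. exact: (big_morph (fun t => Lt t C) (fun a b => LtD a b C) (Lt0 C)). Qed.

Lemma EE (i k a b : 'I_n) : E F i k a b = ((a == i) && (b == k))%:R.
Proof. by rewrite /E mxE. Qed.

Lemma Lt_tp (i k : 'I_n) b C : Lt (tp (E F i k) b) C = C k i *: b.
Proof.
rewrite /Lt.
transitivity (\sum_(q : 'I_n * 'I_n) (((q.1 == i) && (q.2 == k))%:R * C q.2 q.1) *: b).
  apply eq_bigr => q _; by rewrite ffunE EE scalerA mulrC.
by rewrite -scaler_suml sum_delta_pair.
Qed.

Lemma Lt_inj (t1 t2 : tensor F n) : (forall C, Lt t1 C = Lt t2 C) -> t1 = t2.
Proof.
move=> H; apply/ffunP => [[a b]].
have Hd : forall t : tensor F n, Lt t (E F b a) = t (a, b).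
  move=> t; rewrite /Lt.
  transitivity (\sum_(q : 'I_n * 'I_n) ((q.1 == a) && (q.2 == b))%:R *: t q).
    apply eq_bigr => q _; by rewrite EE andbC.
  rewrite (bigD1 (a, b)) //= !eqxx scale1r big1 ?addr0 // => q /negbTE.
  case: q => x y /=; rewrite xpair_eqE => ->; by rewrite scale0r.
by rewrite -!Hd H.
Qed.

Lemma AdE_delta (X Y : 'M[F]_n) (i j a b : 'I_n) :
  (X *m E F i j *m Y) a b = X a i * Y j b.
Proof.
rewrite mxE (bigD1 j) //= big1 ?addr0.
  rewrite mxE (bigD1 i) //= big1 ?addr0 ?EE ?eqxx ?mulr1 //.
  by move=> k /negbTE hk; rewrite EE hk mulr0.
move=> k /negbTE hk; rewrite mxE big1 ?mul0r // => l _.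
by rewrite EE hk andbF mulr0.
Qed.

Lemma tmap_L (X : 'M[F]_n) t C :
  Lt (tmap (Ad X) (Ad X) t) C = Ad X (Lt t (invmx X *m C *m X)).
Proof.
rewrite /Lt /tmap.
transitivity (\sum_(q : 'I_n * 'I_n) \sum_(p : 'I_n * 'I_n)
     (C q.2 q.1 * (Ad X (E F p.1 p.2)) q.1 q.2) *: Ad X (t p)).
  apply eq_bigr => q _; rewrite sum_ffunE scaler_sumr; apply eq_bigr => p _.
  by rewrite ffunE scalerA.
rewrite exchange_big /= {3}/Ad mulmx_sumr mulmx_suml; apply eq_bigr => p _.
rewrite -scaler_suml -scalemxAr -scalemxAl; congr (_ *: _).
rewrite -(pair_bigA _ (fun a b => C b a * (X *m E F p.1 p.2 *m invmx X) a b)) /= mxE; apply eq_bigr => k _; rewrite mxE mulr_suml.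
apply eq_bigr => l _; rewrite AdE_delta; ring.
Qed.


Lemma collapse2 (x y : 'I_n) (G : 'I_n -> 'I_n -> F) :
  (forall a b, ~~ ((a == x) && (b == y)) -> G a b = 0) ->
  \sum_(a < n) \sum_(b < n | (a < b)%N) G a b = ((x < y)%N)%:R * G x y.
Proof.
move=> H; rewrite [LHS](bigD1 x) //= [X in _ + X]big1 ?addr0.
  rewrite big_mkcond [LHS](bigD1 y) //= [X in _ + X]big1 ?addr0.
    by case: (x < y)%N; rewrite ?mul1r ?mul0r.
  move=> b hb; case: ifP => // _; apply: H; by rewrite eqxx /= hb.
move=> a ha; apply: big1 => b _; apply: H; by rewrite (negbTE ha).
Qed.

Lemma dswap (a b x y : 'I_n) : ~~ ((a == x) && (b == y)) -> ((y == b) && (x == a)) = false.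
Proof. by rewrite [y == b]eq_sym [x == a]eq_sym andbC => /negbTE. Qed.

Lemma dsame (a b x y : 'I_n) : ~~ ((a == x) && (b == y)) -> ((x == a) && (y == b)) = false.
Proof. by rewrite [x == a]eq_sym [y == b]eq_sym => /negbTE. Qed.

Variables (G1 : {set 'I_n.-1}) (tau : 'I_n.-1 -> 'I_n.-1) (R0 : 'M[F]_n).
Local Notation tpm := (tau_pow_maps G1 tau).
Definition Lr C := Lt (rBD G1 tau R0) C.

Lemma Lr_entry C u v :
  Lr C u v = (u == v)%:R * (\sum_(i < n) R0 i u * C i i)
          + ((v < u)%N)%:R * C u v
          + ((v < u)%N)%:R * (\sum_(i < n) \sum_(k < n | (i < k)%N)
                 \sum_(1 <= p < n.+1 | tpm p i k v u) C k i)
          - ((u < v)%N)%:R * (\sum_(a < n) \sum_(b < n | (a < b)%N)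
                 \sum_(1 <= p < n.+1 | tpm p u v a b) C a b).
Proof.
rewrite /Lr /rBD !LtD !Lt_sum [LHS]mxE [X in X + _]mxE -[RHS]addrA. congr (_ + _ + _).
- rewrite summxE mulr_sumr; apply eq_bigr => i _.
  rewrite Lt_sum summxE.
  transitivity (\sum_(j < n) (j == u)%:R * ((u == v)%:R * (R0 i j * C i i))).
    apply eq_bigr => j _; rewrite LtZ Lt_tp !mxE.
    case: (eqVneq j u) => [->|hj]; first by rewrite ?eqxx /= eq_sym; ring.
    rewrite /=; ring.
  by rewrite sum_delta; ring.
- rewrite summxE.
  transitivity (\sum_(i < n) \sum_(k < n | (i < k)%N) (C k i * ((u == k) && (v == i))%:R)).
    apply eq_bigr => i _; rewrite Lt_sum summxE; apply eq_bigr => k _.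
    by rewrite Lt_tp mxE ?EE.
  rewrite (collapse2 (x:=v) (y:=u) (G := fun i k => C k i * ((u == k) && (v == i))%:R)).
    by rewrite !eqxx mulr1.
  by move=> a b /dswap ->; rewrite mulr0.
- set Xr := \sum_(i < n) \sum_(k < n | (i < k)%N) \sum_(a < n) \sum_(b < n | (a < b)%N)
      \sum_(1 <= p < n.+1 | tpm p i k a b) (C k i * ((u == b) && (v == a))%:R).
  set Yr := \sum_(i < n) \sum_(k < n | (i < k)%N) \sum_(a < n) \sum_(b < n | (a < b)%N)
      \sum_(1 <= p < n.+1 | tpm p i k a b) (C a b * ((u == i) && (v == k))%:R).
  transitivity (Xr - Yr).
    rewrite summxE /Xr /Yr -sumrB; apply eq_bigr => i _.
    rewrite Lt_sum summxE -sumrB; apply eq_bigr => k _.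
    rewrite Lt_sum summxE -sumrB; apply eq_bigr => a _.
    rewrite Lt_sum summxE -sumrB; apply eq_bigr => b _.
    rewrite Lt_sum summxE -sumrB; apply eq_bigr => p _.
    by rewrite LtB !Lt_tp !mxE ?EE.
  congr (_ - _).
  + rewrite /Xr mulr_sumr; apply eq_bigr => i _; rewrite mulr_sumr; apply eq_bigr => k _.
    rewrite (collapse2 (x:=v) (y:=u) (G := fun a b => \sum_(1 <= p < n.+1 | tpm p i k a b)
         (C k i * ((u == b) && (v == a))%:R))).
      rewrite !eqxx /=; congr (_ * _); apply eq_bigr => p _; by rewrite mulr1.
    move=> a b hab; apply: big1 => p _.
    by rewrite (dswap hab) mulr0.
  + rewrite /Yr (collapse2 (x:=u) (y:=v)).
      congr (_ * _); do 3! (apply eq_bigr => ? _); by rewrite !eqxx mulr1.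
    move=> i k hik; do 3! (apply: big1 => ? _); by rewrite (dsame hik) mulr0.
Qed.


Lemma sum_neq0 (I : eqType) (r : seq I) (P : pred I) (f : I -> F) :
  \sum_(i <- r | P i) f i != 0 -> exists i, [/\ i \in r, P i & f i != 0].
Proof.
move=> H; apply: NNPP => Hn; move: H; rewrite big1_seq ?eqxx // => i /andP [hP hi].
apply/eqP; apply: NNPP => hne; apply: Hn; exists i. by split => //; apply/negP.
Qed.

Hypothesis Hadm : forall i, i \in G1 -> exists k, iter k tau i \notin G1.
Hypothesis hn : (2 <= n)%N.

Definition Udep m (u v : 'I_n) : Prop :=
  m = 0%N \/ exists (a b : 'I_n) q, [/\ (a < b)%N, (m <= q)%N & tpm q u v a b].
Definition Up m (A : 'M[F]_n) : Prop :=
  forall u v, A u v != 0 -> (u < v)%N /\ Udep m u v.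
Definition Ldep m (a b : 'I_n) : Prop :=
  m = 0%N \/ exists (i k : 'I_n) q, [/\ (i < k)%N, (m <= q)%N & tpm q i k a b].
Definition Low m (W : 'M[F]_n) : Prop :=
  forall u v, W u v != 0 -> (v < u)%N /\ Ldep m v u.

Lemma Up_step m A : Up m A -> Up m.+1 (Lr A).
Proof.
move=> HA.
have h0 : forall x y : 'I_n, ~~ (x < y)%N -> A x y = 0.
  move=> x y hxy; apply/eqP; apply: contraT => hne; by rewrite (HA x y hne).1 in hxy.
move=> u v; rewrite Lr_entry.
have -> : \sum_(i < n) R0 i u * A i i = 0.
  by apply: big1 => i _; rewrite h0 ?ltnn // mulr0.
have -> : ((v < u)%N)%:R * A u v = 0.
  case: (ltnP v u) => h; last by rewrite mul0r.
  by rewrite h0 ?mulr0 // -leqNgt ltnW.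
have -> : \sum_(i < n) \sum_(k < n | (i < k)%N) \sum_(1 <= p < n.+1 | tpm p i k v u) A k i = 0.
  apply: big1 => i _; apply: big1 => k hk; apply: big1 => p _.
  by rewrite h0 // -leqNgt ltnW.
rewrite !mulr0 !addr0 add0r oppr_eq0 mulf_eq0 negb_or => /andP [].
case: (ltnP u v) => huv; last by rewrite eqxx.
move=> _ /sum_neq0 [a [_ _ /sum_neq0 [b [_ hab /sum_neq0 [p [hp htp hA]]]]]].
split => //.
have hp1 : (1 <= p)%N by move: hp; rewrite mem_index_iota => /andP [].
have [_ hd] := HA a b hA.
right; case: hd => [->|[a' [b' [q [hab' hq ht]]]]].
  by exists a, b, p.
exists a', b', (p + q); split => //; first lia.
exact: tpm_comp htp ht.
Qed.

Lemma Up_iter m j A : Up m A -> Up (m + j) (iter j Lr A).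
Proof. elim: j => [|j IH] hA; first by rewrite addn0. by rewrite addnS /=; apply: Up_step; apply: IH. Qed.

Lemma Up_zero A : Up n A -> A = 0.
Proof.
move=> HA; apply/matrixP => u v; rewrite mxE; apply/eqP; apply: contraT => hne.
have [huv [hd|[a [b [q [hab hq ht]]]]]] := HA u v hne; first lia.
by have := no_long Hadm huv hq ht.
Qed.

Lemma Low_step m W : Low m W -> Low m.+1 (Lr W - W).
Proof.
move=> HW.
have h0 : forall x y : 'I_n, ~~ (y < x)%N -> W x y = 0.
  move=> x y hxy; apply/eqP; apply: contraT => hne; by rewrite (HW x y hne).1 in hxy.
move=> u v; rewrite mxE Lr_entry mxE.
have -> : \sum_(i < n) R0 i u * W i i = 0.
  by apply: big1 => i _; rewrite h0 ?ltnn // mulr0.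
have -> : \sum_(a < n) \sum_(b < n | (a < b)%N) \sum_(1 <= p < n.+1 | tpm p u v a b) W a b = 0.
  apply: big1 => a _; apply: big1 => b hb; apply: big1 => p _.
  by rewrite h0 // -leqNgt ltnW.
have e : ((v < u)%N)%:R * W u v - W u v = 0.
  case: (ltnP v u) => h; first by rewrite mul1r subrr.
  rewrite h0 ?mulr0 ?subrr //; lia.
rewrite !mulr0 subr0 add0r addrAC e add0r mulf_eq0 negb_or => /andP [].
case: (ltnP v u) => hvu; last by rewrite eqxx.
move=> _ /sum_neq0 [i [_ _ /sum_neq0 [k [_ hik /sum_neq0 [p [hp htp hW]]]]]].
split => //.
have hp1 : (1 <= p)%N by move: hp; rewrite mem_index_iota => /andP [].
have [_ hd] := HW k i hW.
right; case: hd => [->|[i' [k' [q [hik' hq ht]]]]].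
  by exists i, k, p.
exists i', k', (q + p); split => //; first lia.
exact: tpm_comp ht htp.
Qed.

Lemma Low_zero W : Low n W -> W = 0.
Proof.
move=> HW; apply/matrixP => u v; rewrite mxE; apply/eqP; apply: contraT => hne.
have [huv [hd|[a [b [q [hab hq ht]]]]]] := HW u v hne; first lia.
by have := no_long Hadm hab hq ht.
Qed.


Lemma Lr_Ad X : Cset (rBD G1 tau R0) X -> forall B, Lr (Ad X B) = Ad X (Lr B).
Proof.
move=> [hX hinv] B; rewrite /Lr -{1}hinv tmap_L; congr (Ad X (Lt _ _)).
by rewrite /Ad !mulmxA mulVmx // mul1mx -mulmxA mulVmx // mulmx1.
Qed.

Lemma Ad_lin X (A B : 'M[F]_n) : Ad X (A - B) = Ad X A - Ad X B.
Proof. by rewrite /Ad mulmxBr mulmxBl. Qed.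
Lemma Ad0 X : Ad X 0 = 0 :> 'M[F]_n.
Proof. by rewrite /Ad mulmx0 mul0mx. Qed.

Definition Lr' (W : 'M[F]_n) := Lr W - W.

Lemma iter_Ad X (T : 'M[F]_n -> 'M[F]_n) :
  (forall B, T (Ad X B) = Ad X (T B)) -> forall j B, iter j T (Ad X B) = Ad X (iter j T B).
Proof. move=> H; elim=> [//|j IH] B; by rewrite /= IH H. Qed.

Lemma part_iter (T P : 'M[F]_n -> 'M[F]_n) (C : 'M[F]_n) m :
  (forall Y, P (P Y) = P Y) -> (forall Y, P (T Y) = P (T (P Y))) ->
  (forall Y, P Y = Y -> P (T Y) = T Y) -> (forall Z, P Z = Z -> T Z = 0 -> Z = 0) ->
  P (iter m T C) = 0 -> P C = 0.
Proof.
move=> H1 H2 H3 H4.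
have e : forall j, P (iter j T C) = iter j T (P C) /\ P (iter j T (P C)) = iter j T (P C).
  elim=> [|j [IH1 IH2]]; first by rewrite /= H1.
  by rewrite /= H2 IH1 !H3.
have f : forall j, P (iter j T (P C)) = iter j T (P C) -> iter j T (P C) = 0 -> P C = 0.
  elim=> [//|j IH] hP h0; apply: IH; first by rewrite (e j).2.
  by apply: H4; [exact: (e j).2 | exact: h0].
move=> h; apply: (f m); [exact: (e m).2 | by rewrite -(e m).1].
Qed.

Definition lowpart (C : 'M[F]_n) : 'M[F]_n := \matrix_(u, v) if (v < u)%N then C u v else 0.
Definition uppart (C : 'M[F]_n) : 'M[F]_n := \matrix_(u, v) if (u < v)%N then C u v else 0.

Lemma low_idem Y : lowpart (lowpart Y) = lowpart Y.
Proof. apply/matrixP => u v; rewrite !mxE; by case: (v < u)%N. Qed.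
Lemma up_idem Y : uppart (uppart Y) = uppart Y.
Proof. apply/matrixP => u v; rewrite !mxE; by case: (u < v)%N. Qed.

Lemma low_dep Y : lowpart (Lr Y) = lowpart (Lr (lowpart Y)).
Proof.
apply/matrixP => u v; rewrite !mxE; case: ifP => // h.
rewrite !Lr_entry mxE h; congr (_ + _ + _ - _).
- have -> : (u == v) = false by apply/negbTE; rewrite neq_ltn h orbT.
  by rewrite !mul0r.
- congr (_ * _); apply eq_bigr => i _; apply eq_bigr => k hk; apply eq_bigr => p _.
  by rewrite mxE hk.
- rewrite (_ : (u < v)%N = false) ?mul0r //; apply/negbTE; rewrite -leqNgt; exact: ltnW.
Qed.

Lemma low_pres Y : lowpart Y = Y -> lowpart (Lr Y) = Lr Y.
Proof.
move=> hY.
have h0 : forall x y : 'I_n, ~~ (y < x)%N -> Y x y = 0.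
  by move=> x y h; rewrite -hY mxE (negbTE h).
apply/matrixP => u v; rewrite !mxE; case: ifP => // h.
rewrite Lr_entry h.
have -> : \sum_(i < n) R0 i u * Y i i = 0 by apply: big1 => i _; rewrite h0 ?ltnn ?mulr0.
have -> : \sum_(a < n) \sum_(b < n | (a < b)%N) \sum_(1 <= p < n.+1 | tpm p u v a b) Y a b = 0.
  apply: big1 => a _; apply: big1 => b hb; apply: big1 => p _.
  by rewrite h0 // -leqNgt ltnW.
by rewrite !mulr0 !mul0r !addr0 subr0.
Qed.

Lemma low_inj Z : lowpart Z = Z -> Lr Z = 0 -> Z = 0.
Proof.
move=> hZ h0; apply: Low_zero.
have : forall m, Low m Z.
  elim=> [|m IH].
    move=> u v hne; split; last by left.
    by move: hne; rewrite -hZ mxE; case: ifP => //; rewrite eqxx.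
  have := Low_step IH; rewrite h0 sub0r => HN u v hne.
  by apply: HN; rewrite mxE oppr_eq0.
by move=> /(_ n).
Qed.

Lemma up_dep Y : uppart (Lr' Y) = uppart (Lr' (uppart Y)).
Proof.
apply/matrixP => u v; rewrite !mxE; case: ifP => // h.
rewrite !Lr_entry; congr (_ + _ + _ - _ - _).
- have -> : (u == v) = false by apply/negbTE; rewrite neq_ltn h.
  by rewrite !mul0r.
- rewrite (_ : (v < u)%N = false) ?mul0r //; apply/negbTE; rewrite -leqNgt; exact: ltnW.
- rewrite (_ : (v < u)%N = false) ?mul0r //; apply/negbTE; rewrite -leqNgt; exact: ltnW.
- congr (_ * _); apply eq_bigr => i _; apply eq_bigr => k hk; apply eq_bigr => p _.
  by rewrite mxE hk.
Qed.

Lemma up_pres Y : uppart Y = Y -> uppart (Lr' Y) = Lr' Y.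
Proof.
move=> hY.
have h0 : forall x y : 'I_n, ~~ (x < y)%N -> Y x y = 0.
  by move=> x y h; rewrite -hY mxE (negbTE h).
apply/matrixP => u v; rewrite !mxE; case: ifP => // h.
rewrite /Lr' Lr_entry h (h0 u v) ?h //.
have -> : \sum_(i < n) R0 i u * Y i i = 0 by apply: big1 => i _; rewrite h0 ?ltnn ?mulr0.
have -> : \sum_(i < n) \sum_(k < n | (i < k)%N) \sum_(1 <= p < n.+1 | tpm p i k v u) Y k i = 0.
  apply: big1 => a _; apply: big1 => b hb; apply: big1 => p _.
  by rewrite h0 // -leqNgt ltnW.
by rewrite ?mulr0n !mulr0 ?mul0r !addr0 ?subr0 ?oppr0.
Qed.

Lemma up_inj Z : uppart Z = Z -> Lr' Z = 0 -> Z = 0.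
Proof.
move=> hZ h0; have e : Lr Z = Z by apply/eqP; rewrite -subr_eq0; apply/eqP.
apply: Up_zero.
have : forall m, Up m Z.
  elim=> [|m IH].
    move=> u v hne; split; last by left.
    by move: hne; rewrite -hZ mxE; case: ifP => //; rewrite eqxx.
  by have := Up_step IH; rewrite e.
by move=> /(_ n).
Qed.

Definition Sh : 'M[F]_n := \matrix_(i, j) ((j : nat) == i.+1)%:R.

Lemma Up_Sh : Up 0 Sh.
Proof.
move=> u v; rewrite mxE; have [e|ne] := eqVneq (v : nat) u.+1; last by rewrite mulr0n eqxx.
by move=> _; split; [rewrite e | left].
Qed.

Lemma Low_ShT : Low 0 Sh^T.
Proof.
move=> u v; rewrite !mxE; have [e|ne] := eqVneq (u : nat) v.+1; last by rewrite mulr0n eqxx.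
by move=> _; split; [rewrite e | left].
Qed.

Lemma Low_iter m j W : Low m W -> Low (m + j) (iter j Lr' W).
Proof. elim: j => [|j IH] hA; first by rewrite addn0. by rewrite addnS /=; apply: Low_step; apply: IH. Qed.

Lemma low_Ad X : Cset (rBD G1 tau R0) X -> forall u v : 'I_n, (v < u)%N -> Ad X Sh u v = 0.
Proof.
move=> hX.
have h : lowpart (Ad X Sh) = 0.
  apply: (part_iter (T := Lr) (m := n)).
  - exact: low_idem.
  - exact: low_dep.
  - exact: low_pres.
  - exact: low_inj.
  rewrite (iter_Ad (Lr_Ad hX)) (Up_zero (Up_iter (j:=n) Up_Sh)) Ad0.
  by apply/matrixP => u v; rewrite !mxE; case: ifP.
move=> u v huv; move/matrixP: h => /(_ u v); by rewrite !mxE huv.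
Qed.

Lemma up_Ad X : Cset (rBD G1 tau R0) X -> forall u v : 'I_n, (u < v)%N -> Ad X Sh^T u v = 0.
Proof.
move=> hX.
have hL : forall B, Lr' (Ad X B) = Ad X (Lr' B).
  by move=> B; rewrite /Lr' Lr_Ad // Ad_lin.
have h : uppart (Ad X Sh^T) = 0.
  apply: (part_iter (T := Lr') (m := n)).
  - exact: up_idem.
  - exact: up_dep.
  - exact: up_pres.
  - exact: up_inj.
  rewrite (iter_Ad hL) (Low_zero (Low_iter (j:=n) Low_ShT)) Ad0.
  by apply/matrixP => u v; rewrite !mxE; case: ifP.
move=> u v huv; move/matrixP: h => /(_ u v); by rewrite !mxE huv.
Qed.


Lemma Lr_scale c B : Lr (c *: B) = c *: Lr B.
Proof. rewrite /Lr /Lt scaler_sumr; apply eq_bigr => q _; by rewrite mxE scalerA. Qed.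

Lemma Tdiag_E (s : 'I_n -> F) u v : Tdiag s u v = tt s u *+ (u == v).
Proof. by rewrite /Tdiag !mxE. Qed.

Lemma Tdiag_props (s : 'I_n -> F) : (forall i, s i != 0) ->
  [/\ Tdiag s \in unitmx, forall i j : 'I_n, i != j -> Tdiag s i j = 0 &
      forall u, Tdiag s u u = tt s u].
Proof.
move=> hs; split.
- rewrite unitmxE /Tdiag det_diag unitfE; apply/prodf_neq0 => i _; rewrite mxE.
  exact: tt_neq0.
- by move=> i j hij; rewrite Tdiag_E (negbTE hij) mulr0n.
- by move=> u; rewrite Tdiag_E eqxx mulr1n.
Qed.

Lemma Lr_Ad_diag (s : 'I_n -> F) : (forall i, s i != 0) ->
  (forall j, j \in G1 -> s (sr_lo j) = s (sr_lo (tau j))) ->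
  forall B, Lr (Ad (Tdiag s) B) = Ad (Tdiag s) (Lr B).
Proof.
move=> hs hst B; have [hU hd hdiag] := Tdiag_props hs.
set X := Tdiag s.
have hA : forall (M : 'M[F]_n) x y, Ad X M x y = tt s x * M x y / tt s y.
  by move=> M x y; rewrite /Ad Ad_diagE // !hdiag.
have nz := tt_neq0 hs.
have ratio : forall p (i k a b : 'I_n), (i <= k)%N -> (a <= b)%N -> tpm p i k a b ->
    tt s k / tt s i = tt s b / tt s a.
  move=> p i k a b hik hab ht; have H := weight hs hst hik hab ht.
  apply/eqP; rewrite eqr_div ?nz //; apply/eqP; rewrite -H; ring.
apply/matrixP => u v; rewrite hA !Lr_entry.
set r := tt s u / tt s v.
have e1 : (u == v)%:R * (\sum_(i < n) R0 i u * Ad X B i i) =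
          r * ((u == v)%:R * (\sum_(i < n) R0 i u * B i i)).
  have [e|huv] := eqVneq u v.
    subst v.
    rewrite /r mulfV ?nz // mul1r; congr (_ * _); apply eq_bigr => i _.
    by rewrite hA mulrAC mulfV ?nz // mul1r.
  by rewrite !mulr0n !mul0r mulr0.
have e2 : ((v < u)%N)%:R * Ad X B u v = r * (((v < u)%N)%:R * B u v).
  by rewrite hA /r; ring.
have e3 : ((v < u)%N)%:R * (\sum_(i < n) \sum_(k < n | (i < k)%N)
                 \sum_(1 <= p < n.+1 | tpm p i k v u) Ad X B k i) =
          r * (((v < u)%N)%:R * (\sum_(i < n) \sum_(k < n | (i < k)%N)
                 \sum_(1 <= p < n.+1 | tpm p i k v u) B k i)).
  case: (ltnP v u) => hvu; last by rewrite !mul0r mulr0.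
  rewrite !mul1r mulr_sumr; apply eq_bigr => i _; rewrite mulr_sumr; apply eq_bigr => k hk.
  rewrite mulr_sumr; apply eq_bigr => p hp.
  rewrite hA /r -(ratio p i k v u) ?(ltnW hk) ?(ltnW hvu) //; ring.
have e4 : ((u < v)%N)%:R * (\sum_(a < n) \sum_(b < n | (a < b)%N)
                 \sum_(1 <= p < n.+1 | tpm p u v a b) Ad X B a b) =
          r * (((u < v)%N)%:R * (\sum_(a < n) \sum_(b < n | (a < b)%N)
                 \sum_(1 <= p < n.+1 | tpm p u v a b) B a b)).
  case: (ltnP u v) => huv; last by rewrite !mul0r mulr0.
  rewrite !mul1r mulr_sumr; apply eq_bigr => a _; rewrite mulr_sumr; apply eq_bigr => b hb.
  rewrite mulr_sumr; apply eq_bigr => p hp.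
  have := ratio p u v a b (ltnW huv) (ltnW hb) hp; move/(congr1 GRing.inv); rewrite !invf_div => hr.
  rewrite hA /r hr; ring.
rewrite e1 e2 e3 e4 /r; ring.
Qed.


Lemma rootc_simple (j x : 'I_n.-1) : rootc (sr_lo j) (sr_hi j) x = (x == j)%:R.
Proof.
rewrite /rootc /=; have -> : ((j <= x) && (x < j.+1))%N = (x == j).
  by rewrite ltnS -eqn_leq eq_sym.
by case: (x == j).
Qed.

Lemma tpm_simple j : j \in G1 -> tpm 1 (sr_lo j) (sr_hi j) (sr_lo (tau j)) (sr_hi (tau j)).
Proof.
move=> hj; apply/tpmP; split.
  move=> m; rewrite ltnS leqn0 => /eqP -> /=; apply/forallP => x; apply/implyP => hx.
  rewrite rootc_simple; have -> : (x == j) = false.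
    by apply/negbTE; apply: contra hx => /eqP ->.
  by [].
apply: functional_extensionality => x /=; rewrite rootc_simple /tauc.
under eq_bigr do rewrite rootc_simple.
have [e|ne] := eqVneq (tau j) x.
  rewrite (bigD1 j) /=; last by rewrite hj e eqxx.
  rewrite eqxx big1 ?addr0 -?e ?eqxx //.
  by move=> i /andP [_ hi]; rewrite (negbTE hi).
rewrite big1; last first.
  move=> i /andP [_ /eqP hi]; have -> : (i == j) = false.
    by apply/negbTE; apply/eqP => e; move: ne; rewrite -hi e eqxx.
  by rewrite mulr0n.
by rewrite mulr0n.
Qed.

Lemma kappa_neq0 j : [pchar F] =i pred0 -> j \in G1 ->
  Lr (E F (sr_hi j) (sr_lo j)) (sr_hi (tau j)) (sr_lo (tau j)) != 0.
Proof.
move=> hF hj.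
set u0 := sr_hi (tau j); set v0 := sr_lo (tau j).
set B := E F (sr_hi j) (sr_lo j).
have h1 : (u0 == v0) = false.
  apply/negbTE; rewrite -(inj_eq val_inj) /= ; by rewrite neq_ltn ltnSn orbT.
have h2 : (v0 < u0)%N by rewrite /= ltnSn.
have h3 : (u0 < v0)%N = false by apply/negbTE; rewrite -leqNgt ltnW.
rewrite Lr_entry h1 h2 h3 !mul0r mul1r add0r subr0 mul1r.
rewrite (collapse2 (x := sr_lo j) (y := sr_hi j)
   (G := fun i k => \sum_(1 <= p < n.+1 | tpm p i k v0 u0) B k i)); last first.
  move=> a b hab; apply: big1 => p _; rewrite /B EE.
  by have -> : ((b == sr_hi j) && (a == sr_lo j)) = false by rewrite andbC; apply/negbTE.
have h4 : (sr_lo j < sr_hi j)%N by rewrite /= ltnSn.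
rewrite h4 mul1r.
have -> : \sum_(1 <= p < n.+1 | tpm p (sr_lo j) (sr_hi j) v0 u0) B (sr_hi j) (sr_lo j)
   = (\sum_(1 <= p < n.+1 | tpm p (sr_lo j) (sr_hi j) v0 u0) 1%N)%:R.
  rewrite natr_sum; apply eq_bigr => p _; by rewrite /B EE !eqxx.
have -> : B u0 v0 = ((u0 == sr_hi j) && (v0 == sr_lo j) : nat)%:R by rewrite /B EE.
rewrite -natrD (pcharf0P _).1 //.
rewrite big_ltn_cond; last by lia.
rewrite /u0 /v0 tpm_simple //; lia.
Qed.

End S.

Unset Implicit Arguments.

Theorem mainTheorem8 (F : closedFieldType) (hF : [pchar F] =i pred0) (n : nat) (hn : (2 <= n)%N)
  (G1 G2 : {set 'I_n.-1}) (tau : 'I_n.-1 -> 'I_n.-1) (R0 : 'M[F]_n) :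
  admissible G1 G2 tau ->
  in_hh R0 ->
  R0 + R0^T = Omega0c F n ->
  r0_tau_cond G1 tau R0 ->
  forall X : 'M[F]_n,
    Cset (rBD G1 tau R0) X <->
    exists s : 'I_n -> F,
      [/\ forall i, s i != 0,
          forall j, j \in G1 -> s (sr_lo j) = s (sr_lo (tau j)) &
          X = Tdiag s].
Proof.
move=> [_ _ _ Hadm] _ _ _ X; split; last first.
  move=> [s [hs hst ->]]; have [hU hd hdg] := Tdiag_props hs.
  split => //; apply: Lt_inj => C; rewrite tmap_L.
  transitivity (Lr G1 tau R0 (Ad (Tdiag s) (invmx (Tdiag s) *m C *m Tdiag s))).
    by rewrite Lr_Ad_diag.
  by rewrite /Ad !mulmxA mulmxV // mul1mx mulmxK.
move=> hC; have [hU _] := hC.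
have hn0 : (0 < n)%N by lia.
have hlow := low_Ad Hadm hn hC.
have hup := up_Ad Hadm hn hC.
have hd1 : forall u, Ad X (Sh F n) u u = 0.
  by apply: (diag0 hn0 (mulVmx hU)).
have etr : (X *m (Sh F n)^T *m invmx X)^T = (invmx X)^T *m Sh F n *m X^T.
  by rewrite !trmx_mul trmxK mulmxA.
have hd2 : forall u, Ad X (Sh F n)^T u u = 0.
  move=> u; have := diag0 (Y := (invmx X)^T) (Yi := X^T) hn0.
  rewrite -trmx_mul mulVmx // trmx1 => /(_ erefl).
  rewrite -etr => H; have := H _ u; rewrite mxE; apply => {u}.
  move=> u v hvu; rewrite mxE; exact: hup.
have hTU := TriU (X := X) (C := Ad X (Sh F n)).
have hTL := TriL (X := X) (C := Ad X (Sh F n)^T).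
have eU : X *m Sh F n = Ad X (Sh F n) *m X by rewrite /Ad mulmxKV.
have eL : X *m (Sh F n)^T = Ad X (Sh F n)^T *m X by rewrite /Ad mulmxKV.
have hdiag : forall i j : 'I_n, i != j -> X i j = 0.
  move=> i j; rewrite neq_ltn => /orP [] h.
    apply: (hTL eL) => // u v; apply: contraR; rewrite -leqNgt leq_eqVlt.
    case/orP => [/eqP e|hl]; first by rewrite (val_inj e) hd2.
    by rewrite hup.
  apply: (hTU eU) => // u v; apply: contraR; rewrite -leqNgt leq_eqVlt.
  case/orP => [/eqP e|hl]; first by rewrite (val_inj e) hd1.
  by rewrite hlow.
have [nz _] := diag_inv hU hdiag.
pose xN (m : nat) : F := odflt 1 (omap (fun o : 'I_n => X o o) (insub m)).
have xNE : forall o : 'I_n, xN o = X o o by move=> o; rewrite /xN valK.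
have xN_nz : forall m, (m < n)%N -> xN m != 0.
  by move=> m h; have := xNE (Ordinal h) => /= ->; exact: nz.
pose sn (m : nat) : F := if (m.+1 < n)%N then xN m / xN m.+1 else xN m.
exists (fun k : 'I_n => sn k); split.
- move=> i; rewrite /sn; case: ifP => h.
    apply: mulf_neq0; [exact: xN_nz | rewrite invr_eq0; apply: xN_nz; exact: h].
  exact: xN_nz.
- move=> j hj.
  set B := E F (sr_hi j) (sr_lo j).
  have hB : Ad X B = (X (sr_hi j) (sr_hi j) / X (sr_lo j) (sr_lo j)) *: B.
    apply/matrixP => u v; rewrite /Ad Ad_diagE // !mxE.
    case: (eqVneq u (sr_hi j)) => [->|hu]; case: (eqVneq v (sr_lo j)) => [->|hv] /=;
      rewrite ?mulr1 ?mulr0 ?mul0r //; ring.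
  have := Lr_Ad hC B; rewrite hB Lr_scale => /matrixP /(_ (sr_hi (tau j)) (sr_lo (tau j))).
  rewrite mxE /Ad Ad_diagE // [RHS]mulrAC => e0; have e := mulIf (kappa_neq0 tau R0 hn hF hj) e0.
  rewrite /sn /=.
  have h1 : (j.+1 < n)%N by have := ltn_ord j; lia.
  have h2 : ((tau j).+1 < n)%N by have := ltn_ord (tau j); lia.
  rewrite h1 h2.
  have -> : xN j = X (sr_lo j) (sr_lo j) by rewrite -xNE.
  have -> : xN j.+1 = X (sr_hi j) (sr_hi j) by rewrite -xNE.
  have -> : xN (tau j) = X (sr_lo (tau j)) (sr_lo (tau j)) by rewrite -xNE.
  have -> : xN (tau j).+1 = X (sr_hi (tau j)) (sr_hi (tau j)) by rewrite -xNE.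
  by rewrite -[LHS]invf_div e invf_div.
- apply/matrixP => u v; rewrite Tdiag_E.
  case: (eqVneq u v) => [<-|huv]; last by rewrite mulr0n hdiag.
  rewrite mulr1n /tt.
  have -> : \prod_(m < n | (u <= m)%N) sn m = \prod_(u <= k < n) sn k by rewrite big_geq_mkord.
  rewrite -xNE; symmetry.
  suff : forall d m, (n - m)%N = d.+1 -> \prod_(m <= k < n) sn k = xN m.
    move=> H; apply: (H (n - u).-1); have := ltn_ord u; lia.
  elim=> [|d IH] m hd.
    rewrite big_ltn; last by lia.
    rewrite big_geq; last by lia.
    rewrite mulr1 /sn; case: ifP => // h; lia.
  rewrite big_ltn; last by lia.
  rewrite IH; last by lia.
  rewrite /sn; case: ifP => h; last by lia.
  by rewrite mulfVK ?xN_nz.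
Qed.
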